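(* Let $\rho$ be a two-qubit state whose reduced state on qubit $A$ is maximally mixed, i.e. $\vec{x}=0$ where $x_i=\mathrm{Tr}[\rho(\sigma_i\otimes\mathbb{1})]$. Let $y_j=\mathrm{Tr}[\rho(\mathbb{1}\otimes\sigma_j)]$, $T_{ij}=\mathrm{Tr}[\rho(\sigma_i\otimes\sigma_j)]$ and $Y=\vec{y}^{\,T}\vec{y}$ (the $3\times 3$ matrix with entries $y_iy_j$). Then $$G(\rho)=\tfrac14\big[|\vec{y}|^2+\|T\|^2-\kappa\big],$$ where $\|T\|^2=\sum_{i,j}T_{ij}^2$ and $\kappa$ is the largest eigenvalue of $T^TT+Y$.
   Context: $\sigma_i$ are the Pauli matrices. The Hilbert–Schmidt distance is $D(M,N)=\sqrt{\mathrm{Tr}[(M-N)(M-N)^\dagger]}$. For unit vectors $\vec{k},\vec{\ell}\in\mathbb{R}^3$ let $\Pi^A_\pm=\frac12(\mathbb{1}\pm\vec{k}\cdot\vec{\sigma})$, $\Pi^B_\pm=\frac12(\mathbb{1}\pm\vec{\ell}\cdot\vec{\sigma})$, and $\chi_{\vec{k},\vec{\ell}}=\sum_{i,j=\pm}(\Pi^A_i\otimes\Pi^B_j)\rho(\Pi^A_i\otimes\Pi^B_j)$. The symmetric geometric measure is $G(\rho)=\min_{\vec{k},\vec{\ell}}D^2(\rho,\chi_{\vec{k},\vec{\ell}})$ over unit vectors. *)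

(* Defs.v *)
From HB Require Import structures.
From mathcomp Require Import all_boot all_order all_algebra.
From mathcomp Require Import complex mxtens.
Set Implicit Arguments. Unset Strict Implicit. Unset Printing Implicit Defensive.
Import Order.TTheory GRing.Theory Num.Theory.
Local Open Scope ring_scope.

Section QubitDefs.
Variable R : rcfType.
Local Notation C := (R[i]).

Definition adjmx m n (A : 'M[C]_(m, n)) : 'M[C]_(n, m) := (map_mx (@conjc R) A)^T.

(* Pauli matrices sigma_1, sigma_2, sigma_3 (indices 0,1,2) *)
Definition pauli (k : 'I_3) : 'M[C]_2 :=
  \matrix_(a < 2, b < 2)
    (if k == 0 :> nat then (if a == b then 0 else 1)
     else if k == 1 :> nat then
       (if a == b then 0 else if a == 0 :> nat then - 'i%C else 'i%C)
     else (if a == b then (if a == 0 :> nat then 1 else -1) else 0)).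

Definition density_matrix (rho : 'M[C]_4) : Prop :=
  [/\ adjmx rho = rho,
      forall v : 'cV[C]_4, 0 <= (adjmx v *m rho *m v) 0 0
    & \tr rho = 1].

Definition xvec (rho : 'M[C]_4) : 'rV[R]_3 :=
  \row_i complex.Re (\tr (rho *m (pauli i *t (1%:M : 'M[C]_2)))).
Definition yvec (rho : 'M[C]_4) : 'rV[R]_3 :=
  \row_j complex.Re (\tr (rho *m ((1%:M : 'M[C]_2) *t pauli j))).
Definition Tmat (rho : 'M[C]_4) : 'M[R]_3 :=
  \matrix_(i, j) complex.Re (\tr (rho *m (pauli i *t pauli j))).

Definition unit_vec (k : 'rV[R]_3) : Prop := \sum_i k 0 i ^+ 2 = 1.

Definition projk (b : bool) (k : 'rV[R]_3) : 'M[C]_2 :=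
  (2%:R)^-1 *: (1%:M + (if b then 1 else -1) *: \sum_i (k 0 i)%:C%C *: pauli i).

Definition chi (rho : 'M[C]_4) (k l : 'rV[R]_3) : 'M[C]_4 :=
  \sum_(a : bool) \sum_(b : bool)
    ((projk a k *t projk b l) *m rho *m (projk a k *t projk b l)).

Definition HS2 (M N : 'M[C]_4) : C := \tr ((M - N) *m adjmx (M - N)).

(* g is the symmetric geometric measure G(rho): the minimum of
   D^2(rho, chi_{k,l}) over unit vectors k, l (attained and a lower bound) *)
Definition is_G (rho : 'M[C]_4) (g : R) : Prop :=
  (exists k l, [/\ unit_vec k, unit_vec l & HS2 rho (chi rho k l) = g%:C%C]) /\
  (forall k l, unit_vec k -> unit_vec l -> g%:C%C <= HS2 rho (chi rho k l)).

Definition largest_eigenvalue n (M : 'M[R]_n) (kappa : R) : Prop :=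
  eigenvalue M kappa /\ (forall lam, eigenvalue M lam -> lam <= kappa).

End QubitDefs.

(* Main.v *)
Require Import Defs.
From HB Require Import structures.
From mathcomp Require Import all_boot all_order all_algebra.
From mathcomp Require Import complex mxtens ring lra sesquilinear spectral.
Set Implicit Arguments. Unset Strict Implicit. Unset Printing Implicit Defensive.
Import Order.TTheory GRing.Theory Num.Theory.
Local Open Scope ring_scope.


Section Two.
Variable R : rcfType.
Local Notation C := (R[i]).

Definition S (m : 'I_4) : 'M[C]_2 := \matrix_(a < 2, b < 2)
 (if m == 0 :> nat then (if a == b then 1 else 0)
  else if m == 1 :> nat then (if a == b then 0 else 1)
  else if m == 2 :> nat then (if a == b then 0 else if a == 0 :> nat then - 'i%C else 'i%C)
  else (if a == b then (if a == 0 :> nat then 1 else -1) else 0)).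

Lemma S0 : S ord0 = 1%:M.
Proof. by apply/matrixP => a b; rewrite !mxE /=; case: (a == b). Qed.

Lemma S_lift i : S (lift ord0 i) = pauli R i.
Proof. by apply/matrixP => a b; rewrite !mxE lift0 /=. Qed.

Ltac cc := apply/eqP; rewrite eq_complex /= ?(raddfN, raddfD, raddfB) /= ?opprK ?oppr0 ?eqxx.

Ltac ord2 a := case: a => [[|[|//]] ?].
Ltac ord4 a := case: a => [[|[|[|[|//]]]] ?].

Lemma S_herm m : adjmx (S m) = S m.
Proof.
apply/matrixP => a b; rewrite !mxE.
ord4 m; ord2 a; ord2 b; rewrite /= ?oppr0 //; by cc.
Qed.


Ltac cx := try rewrite -[1 : C]/(1 +i* 0)%C; try rewrite -[0 : C]/(0 +i* 0)%C; simpc;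
  apply/eqP; rewrite eq_complex /=; apply/andP; split; apply/eqP.

Lemma trSS m n : \tr (S m *m S n) = (2 * (m == n))%:R.
Proof.
rewrite /mxtrace !big_ord_recl big_ord0 !mxE !big_ord_recl !big_ord0 !mxE /=.
by ord4 m; ord4 n; rewrite /=; cx; ring.
Qed.

Lemma S_complete q p a b :
  \sum_m S m q p * S m a b = (2 * ((p == a) && (q == b)))%:R.
Proof.
rewrite !big_ord_recl big_ord0 !mxE /=.
by ord2 q; ord2 p; ord2 a; ord2 b; rewrite /=; cx; ring.
Qed.

End Two.


Section Two2.
Variable R : rcfType.
Local Notation C := (R[i]).
Ltac ord2 a := case: a => [[|[|//]] ?].
Ltac ord4 a := case: a => [[|[|[|[|//]]]] ?].
Ltac cx := try rewrite -[1 : C]/(1 +i* 0)%C; try rewrite -[0 : C]/(0 +i* 0)%C; simpc;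
  apply/eqP; rewrite eq_complex /=; apply/andP; split; apply/eqP.

Definition M2 (a b c d : C) : 'M[C]_2 :=
  \matrix_(i < 2, j < 2) if i == 0 :> nat then (if j == 0 :> nat then a else b)
                       else (if j == 0 :> nat then c else d).

Lemma mulM2 a b c d a' b' c' d' :
  M2 a b c d *m M2 a' b' c' d' = M2 (a * a' + b * c') (a * b' + b * d') (c * a' + d * c') (c * b' + d * d').
Proof.
apply/matrixP => i j; rewrite !mxE !big_ord_recl big_ord0 !mxE /=.
by ord2 i; ord2 j; rewrite /= addr0.
Qed.

Lemma addM2 a b c d a' b' c' d' :
  M2 a b c d + M2 a' b' c' d' = M2 (a + a') (b + b') (c + c') (d + d').
Proof. by apply/matrixP => i j; rewrite !mxE; ord2 i; ord2 j. Qed.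

Lemma scaleM2 x a b c d : x *: M2 a b c d = M2 (x * a) (x * b) (x * c) (x * d).
Proof. by apply/matrixP => i j; rewrite !mxE; ord2 i; ord2 j. Qed.

Lemma eqM2 a b c d a' b' c' d' : a = a' -> b = b' -> c = c' -> d = d' ->
  M2 a b c d = M2 a' b' c' d'.
Proof. by move=> -> -> -> ->. Qed.

Lemma S_M2 m : S R m = if m == 0 :> nat then M2 1 0 0 1 else if m == 1 :> nat then M2 0 1 1 0
  else if m == 2 :> nat then M2 0 (- 'i%C) 'i%C 0 else M2 1 0 0 (-1).
Proof. by apply/matrixP => i j; ord4 m; ord2 i; ord2 j; rewrite !mxE. Qed.

Lemma one_M2 : (1%:M : 'M[C]_2) = M2 1 0 0 1.
Proof. by apply/matrixP => i j; rewrite !mxE; ord2 i; ord2 j. Qed.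

Lemma pauli_M2 i : pauli R i = S R (lift ord0 i).
Proof. by rewrite S_lift. Qed.


Ltac cx2 := rewrite /real_complex_def; cx.

Definition Kv (k : 'rV[R]_3) : 'M[C]_2 := \sum_i (k 0 i)%:C%C *: pauli R i.

Lemma Kv_M2 k : Kv k = M2 (k 0 (lift ord0 (lift ord0 ord0)))%:C%C
   ((k 0 ord0)%:C%C - 'i%C * (k 0 (lift ord0 ord0))%:C%C)
   ((k 0 ord0)%:C%C + 'i%C * (k 0 (lift ord0 ord0))%:C%C)
   (- (k 0 (lift ord0 (lift ord0 ord0)))%:C%C).
Proof.
rewrite /Kv !big_ord_recl big_ord0 addr0 !pauli_M2 !S_M2 /= !scaleM2 !addM2.
by apply: eqM2; cx2; ring.
Qed.

Lemma projk_M2 b k : projk b k = (2%:R : C)^-1 *: (M2 1 0 0 1 + (if b then 1 else -1) *: Kv k).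
Proof. by rewrite /projk one_M2. Qed.


Definition kf (k : 'rV[R]_3) (m : 'I_4) : R :=
  match nat_of_ord m with
  | 1 => k 0 ord0 | 2 => k 0 (lift ord0 ord0) | 3 => k 0 (lift ord0 (lift ord0 ord0))
  | _ => 0 end.

Definition nk (k : 'rV[R]_3) := k 0 ord0 ^+ 2 + k 0 (lift ord0 ord0) ^+ 2 + k 0 (lift ord0 (lift ord0 ord0)) ^+ 2.

Definition Ag (k : 'rV[R]_3) : 'M[R]_4 := \matrix_(m, n)
  (kf k m * kf k n + (m == n) %:R * (if m == 0 :> nat then (1 + nk k) / 2 else (1 - nk k) / 2)).

Definition Dk (k : 'rV[R]_3) (M : 'M[C]_2) := \sum_(a : bool) projk a k *m M *m projk a k.

Lemma two_C : (2%:R : C)^-1 = ((2%:R : R)^-1)%:C%C.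
Proof. by rewrite fmorphV rmorph_nat. Qed.

Lemma D_gen k m : Dk k (S R m) = \sum_n (Ag k m n)%:C%C *: S R n.
Proof.
rewrite /Dk big_bool /= !projk_M2 Kv_M2 !scaleM2 !addM2 !scaleM2.
rewrite !big_ord_recl big_ord0 addr0.
rewrite !S_M2 /=. 
rewrite !scaleM2 !addM2.
rewrite !mxE /kf /nk /= two_C.
move: (k 0 ord0) (k 0 (lift ord0 ord0)) (k 0 (lift ord0 (lift ord0 ord0))) => k0 k1 k2.
ord4 m; rewrite /= !mulM2 !addM2; apply: eqM2.
all: by field: (@sqr_i R).
Qed.


Definition Amat (k : 'rV[R]_3) : 'M[R]_4 := \matrix_(m, n)
  (kf k m * kf k n + ((m == 0 :> nat) && (n == 0 :> nat))%:R).

Lemma unit_nk k : unit_vec k -> nk k = 1.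
Proof. by rewrite /unit_vec /nk !big_ord_recl big_ord0 addr0 addrA. Qed.

Lemma Ag_unit k : unit_vec k -> Ag k = Amat k.
Proof.
move=> /unit_nk hk; apply/matrixP => m n; rewrite !mxE hk.
by ord4 m; ord4 n; rewrite /=; field.
Qed.

Lemma D_unit k m : unit_vec k -> Dk k (S R m) = \sum_n (Amat k m n)%:C%C *: S R n.
Proof. by move=> hk; rewrite D_gen Ag_unit. Qed.

End Two2.


Section Tens.
Variable R : rcfType.
Local Notation C := (R[i]).

Lemma sum_tens (V : nmodType) m n (F : 'I_(m * n) -> V) :
  \sum_k F k = \sum_a \sum_b F (mxtens_index (a, b)).
Proof.
rewrite (pair_bigA _ (fun a b => F (mxtens_index (a, b)))) /=.
rewrite [RHS](eq_bigr (fun p => F (mxtens_index p))); last by case.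
apply: reindex.
by exists (@mxtens_unindex m n) => ? _; rewrite (mxtens_indexK, mxtens_unindexK).
Qed.

Lemma tr_tens m n (A : 'M[C]_m) (B : 'M[C]_n) : \tr (A *t B) = \tr A * \tr B.
Proof.
rewrite /mxtrace sum_tens mulr_suml; apply: eq_bigr => a _.
rewrite mulr_sumr; apply: eq_bigr => b _; by rewrite tensmxE.
Qed.

Lemma adj_tens m n p q (A : 'M[C]_(m, n)) (B : 'M[C]_(p, q)) :
  adjmx (A *t B) = adjmx A *t adjmx B.
Proof. by rewrite /adjmx map_mxT trmx_tens. Qed.

Lemma tens_suml m n p q I (r : seq I) (F : I -> 'M[C]_(m, n)) (B : 'M[C]_(p, q)) :
  (\sum_(i <- r) F i) *t B = \sum_(i <- r) (F i *t B).
Proof.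
apply/matrixP => i j; rewrite !mxE !summxE mulr_suml; apply: eq_bigr => x _.
by rewrite !mxE.
Qed.

Lemma tens_sumr m n p q I (r : seq I) (A : 'M[C]_(m, n)) (F : I -> 'M[C]_(p, q)) :
  A *t (\sum_(i <- r) F i) = \sum_(i <- r) (A *t F i).
Proof.
apply/matrixP => i j; rewrite !mxE !summxE mulr_sumr; apply: eq_bigr => x _.
by rewrite !mxE.
Qed.

Lemma tensZl m n p q a (A : 'M[C]_(m, n)) (B : 'M[C]_(p, q)) :
  (a *: A) *t B = a *: (A *t B).
Proof. by apply/matrixP => i j; rewrite !mxE mulrA. Qed.

Lemma tensZr m n p q a (A : 'M[C]_(m, n)) (B : 'M[C]_(p, q)) :
  A *t (a *: B) = a *: (A *t B).
Proof. by apply/matrixP => i j; rewrite !mxE mulrCA. Qed.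

Lemma adjmxD m n (A B : 'M[C]_(m, n)) : adjmx (A + B) = adjmx A + adjmx B.
Proof. by rewrite /adjmx map_mxD linearD. Qed.

Lemma adjmxB m n (A B : 'M[C]_(m, n)) : adjmx (A - B) = adjmx A - adjmx B.
Proof. by rewrite /adjmx map_mxB linearB. Qed.

Lemma adjmxZ m n a (A : 'M[C]_(m, n)) : adjmx (a *: A) = (conjc a) *: adjmx A.
Proof. by rewrite /adjmx map_mxZ linearZ. Qed.

Lemma adjmx_sum m n I (r : seq I) (F : I -> 'M[C]_(m, n)) :
  adjmx (\sum_(i <- r) F i) = \sum_(i <- r) adjmx (F i).
Proof.
elim: r => [|x r IH]; first by rewrite !big_nil /adjmx map_mx0 trmx0.
by rewrite !big_cons adjmxD IH.
Qed.

Lemma adjmxM m n p (A : 'M[C]_(m, n)) (B : 'M[C]_(n, p)) :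
  adjmx (A *m B) = adjmx B *m adjmx A.
Proof. by rewrite /adjmx map_mxM trmx_mul. Qed.

Lemma tr_adjmx n (A : 'M[C]_n) : \tr (adjmx A) = conjc (\tr A).
Proof. by rewrite /adjmx mxtrace_tr /mxtrace rmorph_sum; apply: eq_bigr => i _; rewrite mxE. Qed.

Lemma conj_real (z : C) : conjc z = z -> z = (complex.Re z)%:C%C.
Proof. case: z => a b [] /eqP h; have -> : b = 0 by lra. by []. Qed.

End Tens.


Section PFsec.
Variable R : rcfType.
Local Notation C := (R[i]).

Definition X (m n : 'I_4) : 'M[C]_(2 * 2) := S R m *t S R n.
Definition PF (d : 'M[R]_4) : 'M[C]_(2 * 2) := \sum_m \sum_n (d m n)%:C%C *: X m n.

Lemma sum_delta p (F : 'I_p -> C) i : \sum_j F j * (i == j)%:R = F i.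
Proof.
rewrite (bigD1 i) //= eqxx mulr1 big1 ?addr0 // => j /negbTE.
by rewrite eq_sym => ->; rewrite mulr0.
Qed.

Lemma X_herm m n : adjmx (X m n) = X m n.
Proof. by rewrite /X adj_tens !S_herm. Qed.

Lemma adj_PF d : adjmx (PF d) = PF d.
Proof.
rewrite /PF adjmx_sum; apply: eq_bigr => m _; rewrite adjmx_sum; apply: eq_bigr => n _.
by rewrite adjmxZ X_herm conjc_real.
Qed.

Lemma tr_X m n m' n' : \tr (X m n *m X m' n') = 4 * ((m == m')%:R * (n == n')%:R).
Proof.
by rewrite /X tensmx_mul tr_tens !trSS !natrM; ring.
Qed.

Lemma tr_sum n I (r : seq I) (F : I -> 'M[C]_n) : \tr (\sum_(i <- r) F i) = \sum_(i <- r) \tr (F i).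
Proof. by elim: r => [|x r IH]; rewrite ?big_nil ?mxtrace0 // !big_cons mxtraceD IH. Qed.

Lemma tr_PF2 d d' : \tr (PF d *m PF d') = (4 * \sum_m \sum_n d m n * d' m n)%:C%C.
Proof.
have -> : \tr (PF d *m PF d') = \sum_m \sum_n \sum_m' \sum_n'
    (d m n)%:C%C * (d' m' n')%:C%C * \tr (X m n *m X m' n').
  rewrite /PF mulmx_suml tr_sum; apply: eq_bigr => m _.
  rewrite mulmx_suml tr_sum; apply: eq_bigr => n _.
  rewrite -scalemxAl mulmx_sumr mxtraceZ tr_sum mulr_sumr; apply: eq_bigr => m' _.
  rewrite mulmx_sumr tr_sum mulr_sumr; apply: eq_bigr => n' _.
  by rewrite -scalemxAr mxtraceZ mulrA.
rewrite rmorphM rmorph_sum mulr_sumr /=; apply: eq_bigr => m _.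
rewrite rmorph_sum mulr_sumr; apply: eq_bigr => n _.
under eq_bigr do under eq_bigr do rewrite tr_X mulrCA mulrA.
under eq_bigr do under eq_bigr do rewrite mulrA.
under eq_bigr do rewrite sum_delta.
rewrite sum_delta !rmorphM rmorph_nat /=; ring.
Qed.


Lemma X_complete q p i j :
  \sum_m \sum_n X m n q p * X m n i j = (4 * ((p == i) && (q == j)))%:R.
Proof.
case: (mxtens_indexP q) => q1 q2; case: (mxtens_indexP p) => p1 p2.
case: (mxtens_indexP i) => i1 i2; case: (mxtens_indexP j) => j1 j2.
have E : forall u v : 'I_2 * 'I_2, (mxtens_index u == mxtens_index v) = (u == v).
  by move=> u v; apply: inj_eq; apply: (can_inj (@mxtens_indexK 2 2)).
rewrite !E /X.
under eq_bigr do under eq_bigr do rewrite !tensmxE mulrACA.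
under eq_bigr do rewrite -mulr_sumr.
rewrite -mulr_suml !S_complete !xpair_eqE -natrM.
by case: (p1 == i1); case: (q1 == j1); case: (p2 == i2); case: (q2 == j2).
Qed.

Lemma expand (rho : 'M[C]_4) :
  rho = (4%:R : C)^-1 *: \sum_m \sum_n (\tr (rho *m X m n)) *: X m n.
Proof.
apply/matrixP => i j; rewrite !mxE !summxE.
have -> : \sum_m (\sum_n (\tr (rho *m X m n)) *: X m n) i j =
    \sum_p \sum_q rho p q * \sum_m \sum_n X m n q p * X m n i j.
  under eq_bigr do rewrite summxE.
  under eq_bigr do under eq_bigr do rewrite mxE /mxtrace mulr_suml.
  under eq_bigr do under eq_bigr do under eq_bigr do rewrite mxE mulr_suml.
  under eq_bigr do rewrite exchange_big.
  rewrite exchange_big; apply: eq_bigr => p _.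
  under eq_bigr do rewrite exchange_big.
  rewrite exchange_big; apply: eq_bigr => q _.
  rewrite mulr_sumr; apply: eq_bigr => m _; rewrite mulr_sumr; apply: eq_bigr => n _.
  by rewrite mulrA.
under eq_bigr do under eq_bigr do rewrite X_complete natrM mulrCA.
under eq_bigr do rewrite -mulr_sumr.
rewrite -mulr_sumr mulrA mulVf ?mul1r; last by rewrite pnatr_eq0.
under eq_bigr do under eq_bigr do rewrite -mulnb natrM [(_ == j)]eq_sym [(_ == i)]eq_sym mulrA.
under eq_bigr do rewrite sum_delta.
by rewrite sum_delta.
Qed.


Definition cR (rho : 'M[C]_4) : 'M[R]_4 := \matrix_(m, n) complex.Re (\tr (rho *m X m n)).

Lemma rho_PF rho : adjmx rho = rho -> rho = (4%:R : C)^-1 *: PF (cR rho).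
Proof.
move=> hr; rewrite {1}(expand rho) /PF; congr (_ *: _).
apply: eq_bigr => m _; apply: eq_bigr => n _; rewrite mxE -conj_real //.
by rewrite -tr_adjmx adjmxM X_herm hr mxtrace_mulC.
Qed.

Lemma QPFQ (Q : 'M[C]_4) s c :
  Q *m (s *: PF c) *m Q = s *: \sum_m \sum_n (c m n)%:C%C *: (Q *m X m n *m Q).
Proof.
rewrite -scalemxAr -scalemxAl /PF mulmx_sumr mulmx_suml; congr (_ *: _).
apply: eq_bigr => m _; rewrite mulmx_sumr mulmx_suml; apply: eq_bigr => n _.
by rewrite -scalemxAr -scalemxAl.
Qed.

Lemma PF_change (a b c : 'M[R]_4) :
  \sum_m \sum_n (c m n)%:C%C *: (\sum_m' \sum_n' (a m m' * b n n')%:C%C *: X m' n')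
  = PF (a^T *m c *m b).
Proof.
rewrite /PF.
under eq_bigr do under eq_bigr do rewrite scaler_sumr.
under eq_bigr do rewrite exchange_big.
rewrite exchange_big; apply: eq_bigr => m' _.
under eq_bigr do under eq_bigr do rewrite scaler_sumr.
under eq_bigr do rewrite exchange_big.
rewrite exchange_big; apply: eq_bigr => n' _.
rewrite !mxE rmorph_sum scaler_suml.
rewrite exchange_big; apply: eq_bigr => n _.
rewrite !mxE mulr_suml rmorph_sum scaler_suml; apply: eq_bigr => m _.
by rewrite scalerA !mxE -!rmorphM; congr (_%:C%C *: _); ring.
Qed.


Lemma chi_PF k l s c : unit_vec k -> unit_vec l ->
  chi (s *: PF c) k l = s *: PF ((Amat k)^T *m c *m Amat l).
Proof.
move=> hk hl; rewrite /chi.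
under eq_bigr do under eq_bigr do rewrite QPFQ.
under eq_bigr do rewrite -scaler_sumr.
rewrite -scaler_sumr; congr (_ *: _).
rewrite -PF_change.
transitivity (\sum_m \sum_n (c m n)%:C%C *: (Dk k (S R m) *t Dk l (S R n))).
  rewrite /Dk.
  under [RHS]eq_bigr do under eq_bigr do rewrite tens_suml scaler_sumr.
  under [RHS]eq_bigr do rewrite exchange_big.
  rewrite [RHS]exchange_big; apply: eq_bigr => a _.
  under [RHS]eq_bigr do under eq_bigr do rewrite tens_sumr scaler_sumr.
  under [RHS]eq_bigr do rewrite exchange_big.
  rewrite [RHS]exchange_big; apply: eq_bigr => b _.
  apply: eq_bigr => m _; apply: eq_bigr => n _.
  by rewrite /X (tensmx_mul (projk a k) (projk b l) (S R m) (S R n)) (tensmx_mul (projk a k *m S R m) (projk b l *m S R n) (projk a k) (projk b l)).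
apply: eq_bigr => m _; apply: eq_bigr => n _.
rewrite !D_unit // tens_suml; congr (_ *: _); apply: eq_bigr => m' _.
rewrite tens_sumr; apply: eq_bigr => n' _.
by rewrite tensZl tensZr scalerA -rmorphM.
Qed.


Lemma PF_sub c c' : PF (c - c') = PF c - PF c'.
Proof.
rewrite /PF -sumrB; apply: eq_bigr => m _; rewrite -sumrB; apply: eq_bigr => n _.
by rewrite !mxE rmorphB scalerBl.
Qed.

Lemma HS2_PF rho k l : density_matrix rho -> unit_vec k -> unit_vec l ->
  HS2 rho (chi rho k l) =
  ((4%:R)^-1 * \sum_m \sum_n (cR rho - (Amat k)^T *m cR rho *m Amat l) m n ^+ 2)%:C%C.
Proof.
case=> hr _ _ hk hl.
set c := cR rho.
have E := rho_PF hr; rewrite -/c in E.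
rewrite /HS2 E chi_PF // -scalerBr -PF_sub adjmxZ adj_PF -scalemxAl -scalemxAr !mxtraceZ.
have h4 : (4%:R : C)^-1 = ((4%:R : R)^-1)%:C%C by rewrite fmorphV rmorph_nat.
rewrite tr_PF2 h4 conjc_real -!rmorphM; congr (_%:C%C).
set d := (c - _).
suff -> : \sum_m \sum_n d m n ^+ 2 = \sum_m \sum_n d m n * d m n by field.
by apply: eq_bigr => m _; apply: eq_bigr => n _; rewrite expr2.
Qed.

End PFsec.


Section Real.
Variable R : rcfType.
Ltac ord3 a := case: a => [[|[|[|//]]] ?].

Lemma kf_lift (k : 'rV[R]_3) i : kf k (lift ord0 i) = k 0 i.
Proof. by ord3 i; rewrite /kf /=; congr (k 0 _); apply: val_inj. Qed.

Lemma Amat00 (k : 'rV[R]_3) : Amat k ord0 ord0 = 1.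
Proof. by rewrite mxE /kf /= mul0r add0r. Qed.
Lemma Amat0l (k : 'rV[R]_3) j : Amat k ord0 (lift ord0 j) = 0.
Proof. by rewrite mxE /= /kf /= mul0r addr0. Qed.
Lemma Amatl0 (k : 'rV[R]_3) i : Amat k (lift ord0 i) ord0 = 0.
Proof. by rewrite mxE /= {2}/kf /= mulr0 addr0. Qed.
Lemma Amatll (k : 'rV[R]_3) i j : Amat k (lift ord0 i) (lift ord0 j) = k 0 i * k 0 j.
Proof. by rewrite mxE /= !kf_lift addr0. Qed.

Lemma ACA (a c b : 'M[R]_4) m n :
  (a^T *m c *m b) m n = \sum_p \sum_q a p m * c p q * b q n.
Proof.
rewrite mxE exchange_big; apply: eq_bigr => q _; rewrite mxE mulr_suml.
by apply: eq_bigr => p _; rewrite mxE.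
Qed.

Section D.
Variables (c : 'M[R]_4) (k l : 'rV[R]_3).
Let d := c - (Amat k)^T *m c *m Amat l.

Lemma dE m n : d m n = c m n - \sum_p \sum_q Amat k p m * c p q * Amat l q n.
Proof. by rewrite /d mxE; congr (_ + _); rewrite mxE ACA. Qed.

Lemma d00 : d ord0 ord0 = 0.
Proof.
rewrite dE big_ord_recl [\sum_(i < 3) _]big1 => [|i _]; last by rewrite big1 // => q _; rewrite Amatl0 !mul0r.
rewrite addr0 big_ord_recl big1 => [|j _]; last by rewrite Amatl0 mulr0.
by rewrite addr0 !Amat00 mul1r mulr1 subrr.
Qed.


Lemma dl0 i : d (lift ord0 i) ord0 =
  c (lift ord0 i) ord0 - k 0 i * \sum_a k 0 a * c (lift ord0 a) ord0.
Proof.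
rewrite dE big_ord_recl big1 => [|q _]; last by rewrite Amat0l !mul0r.
rewrite add0r mulr_sumr; congr (_ - _); apply: eq_bigr => a _.
rewrite big_ord_recl big1 => [|q _]; last by rewrite Amatl0 mulr0.
by rewrite addr0 Amatll Amat00; ring.
Qed.

Lemma d0l j : d ord0 (lift ord0 j) =
  c ord0 (lift ord0 j) - l 0 j * \sum_b c ord0 (lift ord0 b) * l 0 b.
Proof.
rewrite dE big_ord_recl [\sum_(i < 3) _]big1 => [|p _]; last first.
  by rewrite big1 // => q _; rewrite Amatl0 !mul0r.
rewrite addr0 big_ord_recl Amat0l mulr0 add0r mulr_sumr; congr (_ - _).
by apply: eq_bigr => b _; rewrite Amat00 Amatll; ring.
Qed.

Lemma dll i j : d (lift ord0 i) (lift ord0 j) = c (lift ord0 i) (lift ord0 j)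
  - k 0 i * l 0 j * \sum_a \sum_b k 0 a * c (lift ord0 a) (lift ord0 b) * l 0 b.
Proof.
rewrite dE big_ord_recl big1 => [|q _]; last by rewrite Amat0l !mul0r.
rewrite add0r mulr_sumr; congr (_ - _); apply: eq_bigr => a _.
rewrite big_ord_recl Amat0l mulr0 add0r mulr_sumr; apply: eq_bigr => b _.
by rewrite !Amatll; ring.
Qed.

End D.

Lemma real_id_gen (c : 'M[R]_4) k l :
  \sum_m \sum_n (c - (Amat k)^T *m c *m Amat l) m n ^+ 2 =
  \sum_i c (lift ord0 i) ord0 ^+ 2 - (2 - nk k) * (\sum_i c (lift ord0 i) ord0 * k 0 i) ^+ 2
  + (\sum_j c ord0 (lift ord0 j) ^+ 2 - (2 - nk l) * (\sum_j c ord0 (lift ord0 j) * l 0 j) ^+ 2)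
  + (\sum_i \sum_j c (lift ord0 i) (lift ord0 j) ^+ 2
     - (2 - nk k * nk l) * (\sum_i \sum_j k 0 i * c (lift ord0 i) (lift ord0 j) * l 0 j) ^+ 2).
Proof.
rewrite !big_ord_recl !big_ord0 !d00 !dl0 !d0l !dll.
rewrite !big_ord_recl !big_ord0 /nk.
ring.
Qed.

Lemma real_id (c : 'M[R]_4) k l : unit_vec k -> unit_vec l ->
  \sum_m \sum_n (c - (Amat k)^T *m c *m Amat l) m n ^+ 2 =
  \sum_i c (lift ord0 i) ord0 ^+ 2 - (\sum_i c (lift ord0 i) ord0 * k 0 i) ^+ 2
  + (\sum_j c ord0 (lift ord0 j) ^+ 2 - (\sum_j c ord0 (lift ord0 j) * l 0 j) ^+ 2)
  + (\sum_i \sum_j c (lift ord0 i) (lift ord0 j) ^+ 2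
     - (\sum_i \sum_j k 0 i * c (lift ord0 i) (lift ord0 j) * l 0 j) ^+ 2).
Proof. by move=> /unit_nk hk /unit_nk hl; rewrite real_id_gen hk hl; ring. Qed.

End Real.


Section Eig.
Variable R : rcfType.
Local Notation C := (R[i]).

Lemma realC (x : C) : x \is Num.real -> x = (complex.Re x)%:C%C.
Proof.
case: x => a b; rewrite realE !lecE /= => /orP [] /andP [/eqP hb _].
  by rewrite hb.
by rewrite -hb.
Qed.

Lemma ReMr (z : C) (x : R) : complex.Re (z * x%:C%C) = complex.Re z * x.
Proof. by case: z => a b /=; rewrite mulr0 subr0. Qed.
Lemma ImMr (z : C) (x : R) : complex.Im (z * x%:C%C) = complex.Im z * x.
Proof. by case: z => a b /=; rewrite mulr0 add0r. Qed.
Lemma ReMl (z : C) (x : R) : complex.Re (x%:C%C * z) = x * complex.Re z.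
Proof. by case: z => a b /=; rewrite mul0r subr0. Qed.
Lemma ImMl (z : C) (x : R) : complex.Im (x%:C%C * z) = x * complex.Im z.
Proof. by case: z => a b /=; rewrite mul0r addr0. Qed.

Lemma argmax3 (f : 'I_3 -> R) : exists j0, forall j, f j <= f j0.
Proof.
exists (Order.arg_max (ord0 : 'I_3) xpredT f); case: arg_maxP => // j _ H j'; exact: H.
Qed.


Local Open Scope sesquilinear_scope.

Lemma sym_eig (M : 'M[R]_3) : M^T = M -> exists kappa : R,
  (exists2 v : 'rV[R]_3, v *m M = kappa *: v & v != 0) /\
  (forall u : 'rV[R]_3, (u *m M *m u^T) 0 0 <= kappa * \sum_i u 0 i ^+ 2).
Proof.
move=> hM.
pose MC := map_mx (real_complex R) M.
have hherm : MC \is hermsymmx.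
  rewrite is_hermitianmxE expr0 scale1r; apply/eqP/matrixP => i j.
  rewrite !mxE -[in LHS]hM mxE.
  exact: (esym (conjc_real _)).
have /orthomx_spectralP hsp := hermitian_normalmx hherm.
set P := spectralmx MC in hsp; set D := spectral_diag MC in hsp.
have hU : P \is unitarymx := spectral_unitarymx MC.
have hD : D \is a realmx := hermitian_spectral_diag_real hherm.
pose dR j := complex.Re (D 0 j).
have hDj : forall j, D 0 j = (dR j)%:C%C by move=> j; apply: realC; exact: (mxOverP hD 0 j).
have [j0 hj0] := argmax3 dR.
set kappa := dR j0.
exists kappa; split.
  pose w : 'rV[C]_3 := delta_mx 0 j0 *m P.
  have hw : w *m MC = (kappa%:C%C) *: w.
    rewrite /w hsp invmx_unitary // !mulmxA mulmxtVK // scalemxAl; congr (_ *m _).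
    apply/matrixP => i j; rewrite mul_mx_diag !mxE ord1 eqxx /=.
    by case: (@eqP _ j j0) => [->|_]; rewrite ?mul0r ?mulr0 // mul1r mulr1 hDj.
  have w0 : w != 0.
    apply/eqP => /(congr1 (mulmx^~ (invmx P))); rewrite /w mulmxK ?unitarymx_unit // mul0mx.
    by move/matrixP/(_ 0 j0)/eqP; rewrite !mxE !eqxx /= oner_eq0.
  pose w1 := map_mx (@complex.Re R) w; pose w2 := map_mx (@complex.Im R) w.
  have hw1 : w1 *m M = kappa *: w1.
    apply/rowP => j; have := congr1 (fun A : 'M[C]_(1,3) => complex.Re (A 0 j)) hw; rewrite !mxE /=.
    rewrite raddf_sum ReMl => <-; apply: eq_bigr => i _; by rewrite /= !mxE ReMr.
  have hw2 : w2 *m M = kappa *: w2.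
    apply/rowP => j; have := congr1 (fun A : 'M[C]_(1,3) => complex.Im (A 0 j)) hw; rewrite !mxE /=.
    rewrite raddf_sum ImMl => <-; apply: eq_bigr => i _; by rewrite /= !mxE ImMr.
  case: (eqVneq w1 0) => h1; last by exists w1.
  exists w2 => //; apply: contra w0 => /eqP h2; apply/eqP/rowP => j.
  have e1 : complex.Re (w 0 j) = 0.
    by move: (congr1 (fun A : 'rV[R]_3 => A 0 j) h1); rewrite /w1 mxE [RHS]mxE.
  have e2 : complex.Im (w 0 j) = 0.
    by move: (congr1 (fun A : 'rV[R]_3 => A 0 j) h2); rewrite /w2 mxE [RHS]mxE.
  by rewrite [RHS]mxE; move: e1 e2; case: (w 0 j) => a b /= -> ->.
move=> u; pose uC := map_mx (real_complex R) u.
have hT : uC^t* = uC^T.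
  by apply/matrixP => i j; rewrite !mxE; exact: (conjc_real _).
have e1 : ((u *m M *m u^T) 0 0)%:C%C = (uC *m MC *m uC^t*) 0 0.
  by rewrite hT /uC /MC map_trmx -!map_mxM [RHS]mxE.
have e2 : (kappa * \sum_i u 0 i ^+ 2)%:C%C = kappa%:C%C * (uC *m uC^t*) 0 0.
  rewrite hT rmorphM rmorph_sum mxE; congr (_ * _); apply: eq_bigr => i _.
  by rewrite !mxE expr2 rmorphM.
rewrite -lecR e1 e2 hsp invmx_unitary //.
pose z := uC *m P^t*.
have ez : P *m uC^t* = z^t*.
  by rewrite /z trmx_mul map_mxM trmxCK.
have -> : uC *m (P^t* *m diag_mx D *m P) *m uC^t* = z *m diag_mx D *m z^t*.
  by rewrite -ez /z !mulmxA.
have -> : uC *m uC^t* = z *m z^t*.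
  by rewrite -ez /z mulmxA mulmxKtV.
rewrite !mxE mulr_sumr; apply: ler_sum => j _.
rewrite mul_mx_diag !mxE hDj mulrAC mulrC; apply: ler_wpM2r.
  exact: mulcJ_ge0.
by rewrite lecR.
Qed.

End Eig.


Section Vec.
Variable R : rcfType.

Definition sq (u : 'rV[R]_3) := \sum_i u 0 i ^+ 2.

Lemma sq_ge0 u : 0 <= sq u.
Proof. by apply: sumr_ge0 => i _; exact: sqr_ge0. Qed.

Lemma sq_gt0 u : u != 0 -> 0 < sq u.
Proof.
move=> u0; rewrite lt0r sq_ge0 andbT; apply: contra u0 => /eqP h.
apply/eqP/rowP => j; rewrite mxE; apply/eqP; rewrite -sqrf_eq0; apply/eqP.
by apply: (psumr_eq0P _ h) => // i _; exact: sqr_ge0.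
Qed.

Lemma normalize u : u != 0 -> sq ((Num.sqrt (sq u))^-1 *: u) = 1.
Proof.
move=> u0; have hp := sq_gt0 u0.
rewrite /sq; under eq_bigr do rewrite mxE exprMn.
rewrite -mulr_sumr -/(sq u) exprVn sqr_sqrtr ?mulVf //; last exact: ltW.
by rewrite gt_eqF.
Qed.

Lemma quad_eig (M : 'M[R]_3) u lam : u *m M = lam *: u -> (u *m M *m u^T) 0 0 = lam * sq u.
Proof.
move=> h; rewrite h -scalemxAl mxE; congr (_ * _); rewrite mxE /sq.
by apply: eq_bigr => i _; rewrite mxE expr2.
Qed.

Lemma cauchy3 (k v : 'rV[R]_3) : (\sum_i k 0 i * v 0 i) ^+ 2 <= sq k * sq v.
Proof.
rewrite /sq !big_ord_recl !big_ord0.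
set a0 := k 0 _; set a1 := k 0 _; set a2 := k 0 _.
set b0 := v 0 _; set b1 := v 0 _; set b2 := v 0 _.
have -> : (a0^+2 + (a1^+2 + (a2^+2 + 0))) * (b0^+2 + (b1^+2 + (b2^+2 + 0))) =
  (a0 * b0 + (a1 * b1 + (a2 * b2 + 0))) ^+ 2 +
  ((a0 * b1 - a1 * b0) ^+ 2 + (a0 * b2 - a2 * b0) ^+ 2 + (a1 * b2 - a2 * b1) ^+ 2) by ring.
by rewrite lerDl !addr_ge0 ?sqr_ge0.
Qed.


Definition tl (T : 'M[R]_3) (l : 'rV[R]_3) : 'rV[R]_3 := \row_i \sum_j T i j * l 0 j.

Lemma quadM (T : 'M[R]_3) (y l : 'rV[R]_3) :
  (l *m (T^T *m T + y^T *m y) *m l^T) 0 0 = sq (tl T l) + (\sum_j y 0 j * l 0 j) ^+ 2.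
Proof.
rewrite /sq !mxE !big_ord_recl !big_ord0 !mxE.
rewrite !big_ord_recl !big_ord0 !mxE.
rewrite !big_ord_recl !big_ord0 !mxE.
ring.
Qed.

End Vec.


Section Main.
Variable R : rcfType.
Local Notation C := (R[i]).

Lemma cR_x (rho : 'M[C]_4) i : cR rho (lift ord0 i) ord0 = xvec rho 0 i.
Proof. by rewrite !mxE /X S_lift S0. Qed.
Lemma cR_y (rho : 'M[C]_4) j : cR rho ord0 (lift ord0 j) = yvec rho 0 j.
Proof. by rewrite !mxE /X S_lift S0. Qed.
Lemma cR_T (rho : 'M[C]_4) i j : cR rho (lift ord0 i) (lift ord0 j) = Tmat rho i j.
Proof. by rewrite !mxE /X !S_lift. Qed.

Lemma HS_formula (rho : 'M[C]_4) k l : density_matrix rho -> xvec rho = 0 ->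
  unit_vec k -> unit_vec l ->
  HS2 rho (chi rho k l) = ((4%:R)^-1 * (sq (yvec rho) - (\sum_j yvec rho 0 j * l 0 j) ^+ 2
     + \sum_i \sum_j Tmat rho i j ^+ 2
     - (\sum_i \sum_j k 0 i * Tmat rho i j * l 0 j) ^+ 2))%:C%C.
Proof.
move=> hd hx hk hl; rewrite HS2_PF // real_id //; congr ((_ * _)%:C%C).
set c := cR rho.
have E1 : \sum_i c (lift ord0 i) ord0 ^+ 2 = 0.
  by rewrite big1 // => i _; rewrite /c cR_x hx mxE expr0n.
have E2 : \sum_i c (lift ord0 i) ord0 * k 0 i = 0.
  by rewrite big1 // => i _; rewrite /c cR_x hx mxE mul0r.
have E3 : \sum_j c ord0 (lift ord0 j) ^+ 2 = sq (yvec rho).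
  by apply: eq_bigr => j _; rewrite /c cR_y.
have E4 : \sum_j c ord0 (lift ord0 j) * l 0 j = \sum_j yvec rho 0 j * l 0 j.
  by apply: eq_bigr => j _; rewrite /c cR_y.
have E5 : \sum_i \sum_j c (lift ord0 i) (lift ord0 j) ^+ 2 = \sum_i \sum_j Tmat rho i j ^+ 2.
  by apply: eq_bigr => i _; apply: eq_bigr => j _; rewrite /c cR_T.
have E6 : \sum_i \sum_j k 0 i * c (lift ord0 i) (lift ord0 j) * l 0 j =
   \sum_i \sum_j k 0 i * Tmat rho i j * l 0 j.
  by apply: eq_bigr => i _; apply: eq_bigr => j _; rewrite /c cR_T.
rewrite E1 E2 E3 E4 E5 E6 expr0n /=; ring.
Qed.


End Main.

Lemma s_tl (R : rcfType) (T : 'M[R]_3) (k l : 'rV[R]_3) :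
  \sum_i \sum_j k 0 i * T i j * l 0 j = \sum_i k 0 i * tl T l 0 i.
Proof.
apply: eq_bigr => i _; rewrite mxE mulr_sumr; apply: eq_bigr => j _; by rewrite mulrA.
Qed.

Theorem mainTheorem3 (R : rcfType) (rho : 'M[R[i]]_4) :
  density_matrix rho ->
  xvec rho = 0 ->
  exists kappa : R,
    largest_eigenvalue ((Tmat rho)^T *m Tmat rho + (yvec rho)^T *m yvec rho) kappa /\
    is_G rho ((4%:R)^-1 * (\sum_j yvec rho 0 j ^+ 2
                           + \sum_i \sum_j Tmat rho i j ^+ 2 - kappa)).
Proof.
move=> hd hx.
set T := Tmat rho; set y := yvec rho.
set M := T^T *m T + y^T *m y.
have hMs : M^T = M by rewrite /M linearD /= !trmx_mul !trmxK.
have [kappa [[v hv v0] hb]] := sym_eig hMs.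
exists kappa; split.
  split; first by apply/eigenvalueP; exists v.
  move=> lam /eigenvalueP [u hu u0].
  have := hb u; rewrite (quad_eig hu) => h.
  by rewrite -(ler_pM2r (sq_gt0 u0)).
change (\sum_j y 0 j ^+ 2) with (sq y).
split.
  pose l := (Num.sqrt (sq v))^-1 *: v.
  have hl : unit_vec l := normalize v0.
  have hlM : l *m M = kappa *: l by rewrite /l -scalemxAl hv !scalerA mulrC.
  have hQ := quad_eig hlM; rewrite (normalize v0) mulr1 quadM in hQ.
  set t := tl T l in hQ.
  have [k hk hs] : exists2 k : 'rV[R]_3, unit_vec k &
      (\sum_i \sum_j k 0 i * T i j * l 0 j) ^+ 2 = sq t.
    case: (eqVneq t 0) => ht.
      exists (delta_mx 0 ord0).
        by rewrite /unit_vec !big_ord_recl big_ord0 !mxE /=; ring.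
      rewrite s_tl -/t ht big1 => [|i _]; last by rewrite !mxE mulr0.
      by rewrite expr0n /sq big1 // => i _; rewrite mxE expr0n.
    exists ((Num.sqrt (sq t))^-1 *: t); first exact: normalize.
    rewrite s_tl -/t.
    have -> : \sum_i ((Num.sqrt (sq t))^-1 *: t) 0 i * t 0 i = (Num.sqrt (sq t))^-1 * sq t.
      rewrite /sq mulr_sumr; apply: eq_bigr => i _; by rewrite mxE expr2 mulrA.
    have hp := sq_gt0 ht.
    rewrite exprMn exprVn sqr_sqrtr ?ltW // expr2; field.
    by rewrite gt_eqF.
  exists k, l; split => //; rewrite HS_formula //; congr (_%:C%C).
  rewrite hs -hQ; ring.
move=> k l hk hl; rewrite HS_formula // lecR.
have hQ := hb l; rewrite quadM -/(sq l) in hQ.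
have hl1 : sq l = 1 := hl.
have hk1 : sq k = 1 := hk.
have hcs := cauchy3 k (tl T l).
rewrite -s_tl hk1 mul1r in hcs.
rewrite hl1 mulr1 in hQ.
apply: ler_wpM2l; first by rewrite invr_ge0 ler0n.
lra.
Qed.
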